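(* Fix an integer $k\ge 0$ and a link $i$ of a kinematic tree. Suppose all quantities below depend differentiably on a scalar parameter $\varepsilon$, and let $\delta$ denote $\frac{d}{d\varepsilon}$ at $\varepsilon=0$. Let $\eta_{L_i}\in\mathbb{R}^{6(k+1)}$ be the tangent vector of the world-frame comprehensive force transformation of link $i$, i.e. the vector with $$\delta\big({}^{w}\mathfrak{A}^{*}_{L_i}\big)={}^{w}\mathfrak{A}^{*}_{L_i}\,[\eta_{L_i}\times^{*}_{6\cdot k}].$$ Define the world-frame comprehensive momenta ${}^{w}\mathfrak{h}_{L_j}:={}^{w}\mathfrak{A}^{*}_{L_j}\mathfrak{h}_{L_j}$ and ${}^{w}\mathfrak{h}_{J_j}:={}^{w}\mathfrak{A}^{*}_{L_j}\mathfrak{h}_{J_j}$ for every link $j$, and assume they satisfy, for every link $j$, the propagation rule ${}^{w}\mathfrak{h}_{J_j}={}^{w}\mathfrak{h}_{L_j}+\sum_{c\in\mu(j)}{}^{w}\mathfrak{h}_{J_c}$, where $\mu(j)$ is the set of children of $j$. Then: (1) (world transformation) $\delta\,{}^{w}\mathfrak{h}_{L_i}={}^{w}\mathfrak{A}^{*}_{L_i}\,\delta\mathfrak{h}_{L_i}+{}^{w}\mathfrak{A}^{*}_{L_i}\,[\mathfrak{h}_{L_i}\,\hat{\times}^{*}_{6\cdot k}]\,\eta_{L_i}$; (2) (momentum propagation) $\delta\,{}^{w}\mathfrak{h}_{J_i}=\sum_{j\in\bar\mu(i)} E\,\delta\,{}^{w}\mathfrak{h}_{L_j}$, where $\bar\mu(i)$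 is the set consisting of $i$ and all its descendants and $E$ is the identity matrix; (3) (local recovery) $\delta\mathfrak{h}_{J_i}=\big({}^{w}\mathfrak{A}^{*}_{L_i}\big)^{-1}\delta\,{}^{w}\mathfrak{h}_{J_i}-\Big[\Big(\big({}^{w}\mathfrak{A}^{*}_{L_i}\big)^{-1}\,{}^{w}\mathfrak{h}_{J_i}\Big)\hat{\times}^{*}_{6\cdot k}\Big]\eta_{L_i}$.
   Context: Notation. For $u\in\mathbb{R}^3$, $[u\times]$ is the skew-symmetric cross-product matrix. For $u=(v_0,v_1)\in\mathbb{R}^6$ ($v_0,v_1\in\mathbb{R}^3$), $[u\times_6]=\begin{bmatrix}[v_0\times]&0\\ [v_1\times]&[v_0\times]\end{bmatrix}$ and the force-space operator is $[u\times^{*}_6]:=-[u\times_6]^{T}$. For a stacked vector $u=(u_0,\dots,u_k)\in\mathbb{R}^{6(k+1)}$ with $u_m\in\mathbb{R}^6$, $[u\times^{*}_{6\cdot k}]$ is the block lower-triangular Toeplitz matrix whose $(l,m)$ block ($l\ge m$) is $[u_{l-m}\times^{*}_6]$ and whose blocks above the diagonal are zero. The operator $[x\,\hat{\times}^{*}_{6\cdot k}]$ is the matrix defined by $[x\,\hat{\times}^{*}_{6\cdot k}]\,y=[y\times^{*}_{6\cdot k}]\,x$ for all $y$. The comprehensive representation of a time-dependent quantity $a(t)$ up to order $k$ is the stacked vector $(a, \tfrac{1}{1!}\dot a,\dots,\tfrac{1}{k!}a^{(k)})$. Setting: a multi-link system with tree structure; each link $j$ has a comprehensive link momentum $\mathfrak{h}_{L_j}\in\mathbb{R}^{6(k+1)}$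 (stacked spatial momentum and its scaled time derivatives, in the local frame of link $j$) and a comprehensive joint momentum $\mathfrak{h}_{J_j}\in\mathbb{R}^{6(k+1)}$ (momentum transmitted through the joint connecting link $j$ to its parent, in the local frame of link $j$). ${}^{w}\mathfrak{A}^{*}_{L_j}$ is the comprehensive force transformation of link $j$ relative to the world: the block lower-triangular Toeplitz matrix whose $l$-th subdiagonal block is $\frac{1}{l!}\frac{d^l}{dt^l}A^{*}_j(t)$, where $A^{*}_j=\begin{bmatrix}R_j&[p_j\times]R_j\\0&R_j\end{bmatrix}$ with $(R_j,p_j)$ the world orientation and position of link $j$; it is invertible. *)

(* Defs.v *)
From HB Require Import structures.
From mathcomp Require Import all_boot all_order all_algebra.
From mathcomp Require Import all_classical all_reals all_analysis.
Set Implicit Arguments. Unset Strict Implicit. Unset Printing Implicit Defensive.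
Import Order.TTheory GRing.Theory Num.Theory.
Local Open Scope ring_scope.

Section Defs.
Variable R : realType.

Definition skew3 (v : 'cV[R]_3) : 'M[R]_3 :=
  let c (l : nat) := v (inord l) 0 in
  \matrix_(a < 3, b < 3)
    match val a, val b with
    | 0, 1 => - c 2%N | 0, 2 => c 1%N
    | 1, 0 => c 2%N   | 1, 2 => - c 0%N
    | 2, 0 => - c 1%N | 2, 1 => c 0%N
    | _, _ => 0 end.

Definition cross6 (u : 'cV[R]_6) : 'M[R]_6 :=
  let v0 := @usubmx R 3 3 1 u in
  let v1 := @dsubmx R 3 3 1 u in
  @block_mx R 3 3 3 3 (skew3 v0) 0 (skew3 v1) (skew3 v0).

Definition cross6star (u : 'cV[R]_6) : 'M[R]_6 := - (cross6 u)^T.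

Definition Astar (Rm : 'M[R]_3) (p : 'cV[R]_3) : 'M[R]_6 :=
  @block_mx R 3 3 3 3 Rm (skew3 p *m Rm) 0 Rm.

Definition is_rot (Rm : 'M[R]_3) : Prop := Rm^T *m Rm = 1%:M /\ \det Rm = 1.

Variable k : nat.
Local Notation N := (6 * k.+1)%N.

Definition nth_cv (u : 'cV[R]_N) (i : nat) : R :=
  if @insub nat (fun x => x < N)%N 'I_N i is Some j then u j 0 else 0.

Definition blk (u : 'cV[R]_N) (m : nat) : 'cV[R]_6 :=
  \col_(r < 6) nth_cv u (6 * m + r).

(* block lower-triangular Toeplitz matrix with (l,m) block B (l - m), l >= m *)
Definition toep (B : nat -> 'M[R]_6) : 'M[R]_N :=
  \matrix_(a < N, b < N)
    if (b %/ 6 <= a %/ 6)%N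
    then B (a %/ 6 - b %/ 6)%N (inord (a %% 6)) (inord (b %% 6))
    else 0.

Definition crossK (u : 'cV[R]_N) : 'M[R]_N := toep (fun l => cross6star (blk u l)).

(* [x ^x*_{6.k}] : the matrix with  [x ^x*] y = [y x*] x  for all y
   (its b-th column is [e_b x*] x) *)
Definition hatcross (x : 'cV[R]_N) : 'M[R]_N :=
  \matrix_(a < N, b < N) (crossK (delta_mx b 0) *m x) a 0.

Definition compA (Af : R -> 'M[R]_6) (t : R) : 'M[R]_N :=
  toep (fun l => (l`!%:R)^-1 *: derive1n l Af t).

Definition worldA (Rt : R -> 'M[R]_3) (pt : R -> 'cV[R]_3) (t : R) : 'M[R]_N :=
  compA (fun s => Astar (Rt s) (pt s)) t.

End Defs.

(* kinematic tree on links 'I_n given by a parent map; tree-ness (no cycles)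
   is expressed by a strictly decreasing depth along parent edges *)
Definition is_tree (n : nat) (parent : 'I_n -> option 'I_n) : Prop :=
  exists depth : 'I_n -> nat,
    forall j p, parent j = Some p -> (depth p < depth j)%N.

(* j belongs to mu_bar(i): j is i or a descendant of i *)
Definition descendant (n : nat) (parent : 'I_n -> option 'I_n) (i j : 'I_n) : bool :=
  connect (fun a b => parent b == Some a) i j.

(* Main.v *)
Require Import Defs.
From HB Require Import structures.
From mathcomp Require Import all_boot all_order all_algebra.
From mathcomp Require Import all_classical all_reals all_analysis.
From mathcomp Require Import ring zify.
Import Order.TTheory GRing.Theory Num.Theory.
Local Open Scope ring_scope.
Set Implicit Arguments.
Section H.
Variable R : realType.

Lemma dsum (V : normedModType R) n (P : pred 'I_n) (F : 'I_n -> R -> V) t :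
  (forall j, derivable (F j) t 1) ->
  derivable (fun e => \sum_(j | P j) F j e) t 1 /\
  'D_1 (fun e => \sum_(j | P j) F j e) t = \sum_(j | P j) 'D_1 (F j) t.
Proof.
move=> dF.
have -> : (fun e => \sum_(j | P j) F j e) =
   \sum_(j < n) (fun e => if P j then F j e else 0).
  by rewrite fct_sumE; apply/funext => e; rewrite big_mkcond.
have dG : forall j : 'I_n, derivable (fun e => if P j then F j e else 0) t 1.
  by move=> j; case: (P j) => //; exact: derivable_cst.
split; first exact: derivable_sum.
rewrite derive_sum // [RHS]big_mkcond /=; apply: eq_bigr => j _.
by case: (P j) => //; rewrite derive_cst.
Qed.

Lemma dmul m n p (M : R -> 'M[R]_(m,n)) (h : R -> 'M[R]_(n,p)) t :
  derivable M t 1 -> derivable h t 1 ->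
  derivable (fun e => M e *m h e) t 1 /\
  'D_1 (fun e => M e *m h e) t = 'D_1 M t *m h t + M t *m 'D_1 h t.
Proof.
move=> dM dh.
have dM' := (derivable_mxP M t 1).1 dM.
have dh' := (derivable_mxP h t 1).1 dh.
have de : forall i j, derivable (fun x => (M x *m h x) i j) t 1 /\
   'D_1 (fun x => (M x *m h x) i j) t =
   \sum_l ('D_1 (fun x => M x i l) t * h t l j + M t i l * 'D_1 (fun x => h x l j) t).
  move=> i j.
  have -> : (fun x => (M x *m h x) i j) =
      \sum_(l < n) ((fun x => M x i l) * (fun x => h x l j)).
    by rewrite fct_sumE; apply/funext => x; rewrite mxE.
  have dl : forall l, derivable ((fun x => M x i l) * (fun x => h x l j)) t 1.
    by move=> l; apply: derivableM.
  split; first exact: derivable_sum.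
  rewrite derive_sum //; apply: eq_bigr => l _.
  rewrite deriveM //= addrC /GRing.scale /= mulrC; congr (_ + _); exact: mulrC.
have dP : derivable (fun e => M e *m h e) t 1.
  by apply/derivable_mxP => i j; case: (de i j).
split => //.
rewrite derive_mx // (derive_mx dM) (derive_mx dh).
apply/matrixP => i j; rewrite !mxE (de i j).2 big_split /=; congr (_ + _);
  by apply: eq_bigr => l _; rewrite !mxE.
Qed.

End H.
Section L.
Variable R : realType.
Variable k : nat.
Local Notation N := (6 * k.+1)%N.

Lemma skew3_lin (a : R) u v : skew3 (a *: u + v) = a *: skew3 u + skew3 v.
Proof.
apply/matrixP => p q; rewrite !mxE.
case: p => [[|[|[|p]]] Hp]; case: q => [[|[|[|q]]] Hq] /=; rewrite ?mxE; ring.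
Qed.

Lemma cross6_lin (a : R) u v : cross6 (a *: u + v) = a *: cross6 u + cross6 v.
Proof.
rewrite /cross6 /= !linearP /= !skew3_lin.
apply/matrixP => p q; rewrite !mxE.
case: (@fintype.split 3 3 p) => p'; rewrite !mxE; case: (@fintype.split 3 3 q) => q'; rewrite !mxE //.
by rewrite mulr0 addr0.
Qed.

Lemma cross6star_lin (a : R) u v :
  cross6star (a *: u + v) = a *: cross6star u + cross6star v.
Proof.
by rewrite /cross6star cross6_lin linearP /= opprD scalerN.
Qed.

Lemma nth_cv_lin (a : R) (u v : 'cV[R]_N) i :
  nth_cv (a *: u + v) i = a * nth_cv u i + nth_cv v i.
Proof.
rewrite /nth_cv; case: insubP => [j _ _|_]; rewrite ?mxE //; ring.
Qed.

Lemma blk_lin (a : R) (u v : 'cV[R]_N) m :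
  blk (a *: u + v) m = a *: blk u m + blk v m.
Proof. by apply/matrixP => p q; rewrite !mxE nth_cv_lin. Qed.

Lemma crossK_lin (a : R) (u v : 'cV[R]_N) :
  crossK (a *: u + v) = a *: crossK u + crossK v.
Proof.
apply/matrixP => p q; rewrite /crossK /toep [LHS]mxE blk_lin.
rewrite (cross6star_lin a (blk u (p %/ 6 - q %/ 6)) (blk v (p %/ 6 - q %/ 6))).
rewrite !mxE.
case: ifP => _; last by rewrite mulr0 addr0.
by [].
Qed.

Lemma crossK0 : crossK (0 : 'cV[R]_N) = 0.
Proof.
have h := crossK_lin 1 0 0; rewrite !scale1r addr0 in h.
by move: h; rewrite -{1}[crossK 0]addr0 => /addrI <-.
Qed.

Lemma crossK_sumZ (I : finType) (c : I -> R) (F : I -> 'cV[R]_N) :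
   crossK (\sum_i c i *: F i) = \sum_i c i *: crossK (F i).
Proof.
elim/big_rec2: _ => [|i y1 y2 _ <-]; first exact: crossK0.
by rewrite crossK_lin.
Qed.

Lemma crossK_dec (u : 'cV[R]_N) :
  crossK u = \sum_b u b 0 *: crossK (delta_mx b 0).
Proof.
rewrite {1}(matrix_sum_delta u).
under eq_bigr do rewrite big_ord1.
by rewrite crossK_sumZ.
Qed.

Lemma crossK_hat (u x : 'cV[R]_N) : crossK u *m x = hatcross x *m u.
Proof.
rewrite crossK_dec mulmx_suml.
apply/matrixP => p q; rewrite ord1 !mxE summxE.
apply: eq_bigr => b _; rewrite -scalemxAl !mxE mulrC.
done.
Qed.
End L.
Section T.
Variables (n : nat) (parent : 'I_n -> option 'I_n) (depth : 'I_n -> nat).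
Hypothesis hd : forall j p, parent j = Some p -> (depth p < depth j)%N.
Local Notation desc := (descendant parent).
Local Notation e := (fun a b => parent b == Some a).

Lemma desc_refl j : desc j j.
Proof. exact: connect0. Qed.

Lemma desc_child c j d : parent c = Some j -> desc c d -> desc j d.
Proof.
move=> hc; apply: connect_trans; apply: connect1; by rewrite /= hc.
Qed.
Arguments desc_child {c j d} _ _.


Lemma desc_depth j d : desc j d -> (depth j <= depth d)%N.
Proof.
move/connectP => [s pth ->] {d}.
elim: s j pth => [|c s IH] j //= /andP [/eqP hc pth].
move: (hd hc) (IH _ pth) => h1 h2; exact: leq_trans (ltnW h1) h2.
Qed.
Arguments desc_depth {j d} _.


Lemma desc_last j d : desc j d -> d = j \/ exists p, parent d = Some p /\ desc j p.
Proof.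
move/connectP => [s pth ->] {d}.
case/lastP: s pth => [|s z]; first by left.
rewrite rcons_path last_rcons => /andP [pth /eqP hz]; right.
exists (last j s); split => //; apply/connectP; by exists s.
Qed.
Arguments desc_last {j d} _.


Lemma desc_first j d : desc j d = (d == j) || [exists c, (parent c == Some j) && desc c d].
Proof.
apply/idP/idP.
  move/connectP => [[|c s] /= pth ->]; first by rewrite eqxx.
  case/andP: pth => hc pth; apply/orP; right; apply/existsP; exists c.
  by rewrite hc /=; apply/connectP; exists s.
case/orP => [/eqP -> | /existsP [c /andP [/eqP hc hd']]]; first exact: desc_refl.
exact: desc_child hc hd'.
Qed.

Lemma desc_comp m : forall a b d, (depth d <= m)%N -> desc a d -> desc b d -> desc a b \/ desc b a.
Proof.
elim: m => [|m IH] a b d hm ha hb.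
  case: (desc_last ha) => [Hda|[p [hp _]]]; first by right; rewrite -Hda.
  by have := hd hp; lia.
case: (desc_last ha) => [Hda|[p [hp hap]]]; first by right; rewrite -Hda.
case: (desc_last hb) => [Hdb|[p' [hp' hbp]]]; first by left; rewrite -Hdb.
rewrite hp in hp'; case: hp' => <- in hbp.
apply: (IH a b p) => //; have := hd hp; lia.
Qed.
Arguments desc_comp m {a b d} _ _ _.


Lemma desc_uniq j c1 c2 d : parent c1 = Some j -> parent c2 = Some j ->
  desc c1 d -> desc c2 d -> c1 = c2.
Proof.
move=> h1 h2 d1 d2.
have H : forall x y, parent x = Some j -> parent y = Some j -> desc x y -> x = y.
  move=> x y hx hy dxy; case: (desc_last dxy) => [//|[p [hp dxp]]].
  rewrite hy in hp; case: hp => <- in dxp.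
  by have := desc_depth dxp; have := hd hx; lia.
case: (desc_comp _ (leqnn _) d1 d2) => dd; first exact: H.
by apply/esym; apply: H.
Qed.
Arguments desc_uniq {j c1 c2 d} _ _ _ _.


Lemma desc_sum (V : zmodType) (f : 'I_n -> V) j :
  \sum_(d | desc j d) f d =
  f j + \sum_(c | parent c == Some j) \sum_(d | desc c d) f d.
Proof.
have -> : \sum_(c | parent c == Some j) \sum_(d | desc c d) f d =
          \sum_d (if [exists c, (parent c == Some j) && desc c d] then f d else 0).
  under eq_bigr do rewrite big_mkcond /=.
  rewrite exchange_big /=; apply: eq_bigr => d _.
  case: existsP => [[c0 /andP [/eqP h0 dc0]]|hn].
    rewrite (bigD1 c0) /=; last by rewrite h0.
    rewrite dc0 big1 ?addr0 // => c /andP [/eqP hc nc].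
    case: ifP => // dc; case/eqP: nc; exact: desc_uniq hc h0 dc dc0.
  rewrite big1 // => c hc; case: ifP => // dc; case: hn; exists c.
  by rewrite hc dc.
rewrite big_mkcond /=.
under eq_bigr do rewrite desc_first.
have -> : f j = \sum_d (if d == j then f d else 0).
  by rewrite -big_mkcond /= big_pred1_eq.
rewrite -big_split /=; apply: eq_bigr => d _.
case: eqP => [->|_] /=; last by rewrite add0r.
case: existsP => [[c /andP [/eqP hc dc]]|]; last by rewrite addr0.
by have := desc_depth dc; have := hd hc; lia.
Qed.

End T.
Unset Implicit Arguments.
Theorem lemma4 (R : realType) (k n : nat) (parent : 'I_n -> option 'I_n)
  (Rot : 'I_n -> R -> R -> 'M[R]_3) (pos : 'I_n -> R -> R -> 'cV[R]_3)
  (t0 : R) (hL hJ : 'I_n -> R -> 'cV[R]_(6 * k.+1))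
  (i : 'I_n) (eta : 'cV[R]_(6 * k.+1)) :
  is_tree parent ->
  let A (j : 'I_n) (e : R) := worldA k (Rot j e) (pos j e) t0 in
  (forall j e t, is_rot (Rot j e t)) ->
  (forall j e, A j e \in unitmx) ->
  (forall j e, derivable (A j) e 1) ->
  (forall j e, derivable (hL j) e 1) ->
  (forall j e, derivable (hJ j) e 1) ->
  derive1 (A i) 0 = A i 0 *m crossK eta ->
  (forall j e, A j e *m hJ j e
               = A j e *m hL j e + \sum_(c | parent c == Some j) A c e *m hJ c e) ->
  [/\ derive1 (fun e => A i e *m hL i e) 0
        = A i 0 *m derive1 (hL i) 0 + A i 0 *m hatcross (hL i 0) *m eta,
      derive1 (fun e => A i e *m hJ i e) 0
        = \sum_(j | descendant parent i j)
            1%:M *m derive1 (fun e => A j e *m hL j e) 0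
    & derive1 (hJ i) 0
        = invmx (A i 0) *m derive1 (fun e => A i e *m hJ i e) 0
          - hatcross (invmx (A i 0) *m (A i 0 *m hJ i 0)) *m eta].
Proof.
move=> [depth hd] A hrot hunit dA dhL dhJ hAeta hprop.
have dP : forall j, derivable (fun e => A j e *m hL j e) 0 1.
  by move=> j; case: (dmul (dA j 0) (dhL j 0)).
have claim : forall j e, A j e *m hJ j e = \sum_(d | descendant parent j d) A d e *m hL d e.
  move=> j e.
  set M := (\max_(x : 'I_n) depth x)%N.
  suff H : forall m j, (M - depth j <= m)%N ->
      A j e *m hJ j e = \sum_(d | descendant parent j d) A d e *m hL d e.
    exact: (H _ j (leqnn _)).
  elim => [|m IH] j' hm.
    have hnc : forall c, (parent c == Some j') = false.
      move=> c; apply/negP => /eqP hc; have := hd _ _ hc.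
      have : (depth c <= M)%N by apply: leq_bigmax.
      lia.
    rewrite hprop (@desc_sum n parent depth hd); congr (_ + _).
    by rewrite !big_pred0.
  rewrite hprop (@desc_sum n parent depth hd); congr (_ + _); apply: eq_bigr => c /eqP hc.
  apply: IH; have := hd _ _ hc.
  have : (depth c <= M)%N by apply: leq_bigmax.
  lia.
split.
- rewrite derive1E (dmul (dA i 0) (dhL i 0)).2 -derive1E hAeta -derive1E.
  by rewrite -[A i 0 *m crossK eta *m _]mulmxA crossK_hat mulmxA addrC.
- rewrite derive1E.
  have -> : (fun e => A i e *m hJ i e) =
     (fun e => \sum_(d | descendant parent i d) A d e *m hL d e).
    by apply/funext => e; exact: claim.
  rewrite (dsum _ _ dP).2; apply: eq_bigr => d _.
  by rewrite mul1mx derive1E.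
- rewrite [X in _ = invmx _ *m X - _]derive1E (dmul (dA i 0) (dhJ i 0)).2.
  rewrite -derive1E hAeta -!derive1E mulmxDr !mulmxA mulVmx // !mul1mx.
  by rewrite crossK_hat addrAC subrr add0r.
Qed.
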